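(* Let $\mathcal H$ be a graded connected Hopf algebra over a field $\Bbbk$ and $\varphi,\psi\colon\mathcal H\to\Bbbk$ characters. There is an isomorphism of graded Hopf algebras $S(\varphi,\psi)^*\cong\mathcal H^*/I(\varphi,\psi)$.
   Context: $\mathcal H=\bigoplus_{n\ge0}\mathcal H_n$ is graded connected with each $\mathcal H_n$ finite-dimensional; $\mathcal H^*=\bigoplus_n(\mathcal H_n)^*$ is its graded dual Hopf algebra, and $S(\varphi,\psi)^*$ the graded dual of $S(\varphi,\psi)$. For a linear functional $\varphi$, $\varphi_n=\varphi|_{\mathcal H_n}$. $S(\varphi,\psi)$ is the largest graded subcoalgebra of $\mathcal H$ on which $\varphi=\psi$, and $I(\varphi,\psi)$ is the ideal of $\mathcal H^*$ generated by $\varphi_n-\psi_n$, $n\ge0$. (Both are known to be, respectively, a graded Hopf subalgebra and a graded Hopf ideal.) *)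

(* Defs.v *)
(* Graded connected Hopf algebras of finite type over a
   field K, presented by structure constants with respect to a homogeneous
   basis: H_n has basis b_{n,i}, i : 'I_(hdim n); an element of H_n is the
   row vector of its coordinates, 'rV[K]_(hdim n).  The graded dual H^* has
   the dual basis, so (H^* )_n is also 'rV[K]_(hdim n) (a row a encodes the
   functional b_{n,i} |-> a_i). *)
From HB Require Import structures.
From mathcomp Require Import all_boot all_order all_algebra.
Set Implicit Arguments.
Unset Strict Implicit.
Unset Printing Implicit Defensive.
Import GRing.Theory.
Local Open Scope ring_scope.

Record gHopfData (K : fieldType) := GHopfData {
  hdim : nat -> nat;
  (* smc p q n i j k = coefficient of b_{n,k} in b_{p,i} * b_{q,j} *)
  smc : forall p q n, 'I_(hdim p) -> 'I_(hdim q) -> 'I_(hdim n) -> K;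
  (* sdc p q n i j k = coefficient of b_{p,i} (x) b_{q,j} in Delta b_{n,k} *)
  sdc : forall p q n, 'I_(hdim p) -> 'I_(hdim q) -> 'I_(hdim n) -> K;
  (* ssc n i j = coefficient of b_{n,j} in S(b_{n,i})  (S is graded) *)
  ssc : forall n, 'I_(hdim n) -> 'I_(hdim n) -> K
}.
Arguments hdim {K} g n.
Arguments smc {K} g p q n.
Arguments sdc {K} g p q n.
Arguments ssc {K} g n.

Section GHopf.
Unset Implicit Arguments.
Context {K : fieldType} {H : gHopfData K}.
Local Notation d := (hdim H).
Local Notation mc := (smc H).
Local Notation dc := (sdc H).
Local Notation sc := (ssc H).

(* The unit is 1 = b_{0,i0} (H_0 = K 1, hdim 0 = 1); the counit is
   eps(b_{n,i}) = (n == 0). *)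
Definition is_gcHopf : Prop :=
  d 0 = 1%N /\
      (forall p q n i j k, n != (p + q)%N -> mc p q n i j k = 0) /\
      (forall p q n i j k, n != (p + q)%N -> dc p q n i j k = 0) /\
      (forall p q r n i j k t,
          \sum_(l : 'I_(d (p + q))) mc p q (p + q) i j l * mc (p + q) r n l k t
        = \sum_(l : 'I_(d (q + r))) mc q r (q + r) j k l * mc p (q + r) n i l t) /\
      (forall q n (i0 : 'I_(d 0)) j k,
          mc 0 q n i0 j k = ((n == q) && (val j == val k))%:R) /\
      (forall p n (i0 : 'I_(d 0)) i k,
          mc p 0 n i i0 k = ((n == p) && (val i == val k))%:R) /\
      (forall p q r n i j k t,
          \sum_(l : 'I_(d (p + q))) dc (p + q) r n l k t * dc p q (p + q) i j l
        = \sum_(l : 'I_(d (q + r))) dc p (q + r) n i l t * dc q r (q + r) j k l) /\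
      (forall q n (i0 : 'I_(d 0)) j k,
          dc 0 q n i0 j k = ((n == q) && (val j == val k))%:R) /\
      (forall p n (i0 : 'I_(d 0)) i k,
          dc p 0 n i i0 k = ((n == p) && (val i == val k))%:R) /\
      (* Delta is multiplicative: Delta(b_{p,i} b_{q,j}) = Delta(b_{p,i}) Delta(b_{q,j}),
         compared on the coefficient of b_{a,s} (x) b_{b,t}; and Delta(1) = 1 (x) 1 *)
      (forall p q a b i j s t,
          \sum_(k : 'I_(d (p + q))) mc p q (p + q) i j k * dc a b (p + q) s t k
        = \sum_(p1 < p.+1) \sum_(q1 < q.+1)
            \sum_(i1 : 'I_(d p1)) \sum_(i2 : 'I_(d (p - p1)))
            \sum_(j1 : 'I_(d q1)) \sum_(j2 : 'I_(d (q - q1)))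
              dc p1 (p - p1) p i1 i2 i * dc q1 (q - q1) q j1 j2 j
              * mc p1 q1 a i1 j1 s * mc (p - p1) (q - q1) b i2 j2 t) /\
      (forall s t k : 'I_(d 0), dc 0 0 0 s t k = 1) /\
      (* antipode: m (S (x) id) Delta = eta eps = m (id (x) S) Delta *)
      (forall n t k,
          \sum_(p < n.+1) \sum_(i : 'I_(d p)) \sum_(j : 'I_(d (n - p)))
             \sum_(i' : 'I_(d p))
               dc p (n - p) n i j t * sc p i i' * mc p (n - p) n i' j k
        = (n == 0%N)%:R) /\
      (forall n t k,
          \sum_(p < n.+1) \sum_(i : 'I_(d p)) \sum_(j : 'I_(d (n - p)))
             \sum_(j' : 'I_(d (n - p)))
               dc p (n - p) n i j t * sc (n - p) j j' * mc p (n - p) n i j' k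
        = (n == 0%N)%:R).

Definition lfun := forall n, 'I_(d n) -> K.

Definition lval (phi : lfun) n (x : 'rV[K]_(d n)) : K :=
  \sum_(i : 'I_(d n)) x 0 i * phi n i.

Definition lcomp (phi : lfun) n : 'rV[K]_(d n) := \row_i phi n i.

Definition is_character (phi : lfun) : Prop :=
  (forall (i0 : 'I_(d 0)), phi 0%N i0 = 1) /\
  (forall p q i j,
     \sum_(k : 'I_(d (p + q))) mc p q (p + q) i j k * phi (p + q)%N k
     = phi p i * phi q j).

(* Product of homogeneous elements of H (landing in degree n; zero unless n = p + q). *)
Definition hmul p q n (x : 'rV[K]_(d p)) (y : 'rV[K]_(d q)) : 'rV[K]_(d n) :=
  \row_k \sum_i \sum_j x 0 i * y 0 j * mc p q n i j k.

(* The (p,q)-component of Delta x for x in H_n, as an element of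
   H_p (x) H_q = 'M_(d p, d q). *)
Definition comulm p q n (x : 'rV[K]_(d n)) : 'M[K]_(d p, d q) :=
  \matrix_(i, j) \sum_k x 0 k * dc p q n i j k.

(* Product in the graded dual H^* (dual to Delta), of homogeneous elements. *)
Definition dmul p q n (f : 'rV[K]_(d p)) (g : 'rV[K]_(d q)) : 'rV[K]_(d n) :=
  \row_k \sum_i \sum_j dc p q n i j k * f 0 i * g 0 j.

(* The (p,q)-component of the coproduct of a in (H^* )_n (dual to the
   product of H), as an element of H^*_p (x) H^*_q: entry (i,j) = a(b_{p,i} b_{q,j}). *)
Definition dcomulm p q n (a : 'rV[K]_(d n)) : 'M[K]_(d p, d q) :=
  \matrix_(i, j) \sum_k mc p q n i j k * a 0 k.

(* U (x) V inside 'M_(m, n) = K^m (x) K^n. *)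
Definition in_tensor m n (U : {vspace 'rV[K]_m}) (V : {vspace 'rV[K]_n})
    (M : 'M[K]_(m, n)) : Prop :=
  exists s : seq ('rV[K]_m * 'rV[K]_n),
    (forall uv, uv \in s -> uv.1 \in U /\ uv.2 \in V) /\
    M = \sum_(uv <- s) (uv.1^T *m uv.2).

Definition gsubspace := forall n, {vspace 'rV[K]_(d n)}.

Definition is_gsubcoalg (T : gsubspace) : Prop :=
  forall n x, x \in T n -> forall p, (p <= n)%N ->
    in_tensor (d p) (d (n - p)) (T p) (T (n - p)%N) (comulm p (n - p) n x).

Definition agree_on (phi psi : lfun) (T : gsubspace) : Prop :=
  forall n x, x \in T n -> lval phi n x = lval psi n x.

Definition is_S (phi psi : lfun) (S : gsubspace) : Prop :=
  [/\ is_gsubcoalg S, agree_on phi psi S &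
      forall T, is_gsubcoalg T -> agree_on phi psi T ->
        forall n, (T n <= S n)%VS].

Definition drow n (i : 'I_(d n)) : 'rV[K]_(d n) := delta_mx 0 i.

(* Degree-n component of I(phi,psi), the two-sided ideal of H^* generated by
   the phi_m - psi_m: spanned by the a (phi_m - psi_m) b with a, b homogeneous
   (basis) elements of H^* of degrees p, n - m - p. *)
Definition Icomp (phi psi : lfun) n : {vspace 'rV[K]_(d n)} :=
  (\sum_(m < n.+1) \sum_(p < (n - m).+1)
     \sum_(i : 'I_(d p)) \sum_(j : 'I_(d (n - m - p)))
       <[ dmul (p + m) (n - m - p) n
            (dmul p m (p + m) (drow p i) (lcomp phi m - lcomp psi m))
            (drow (n - m - p) j) ]>)%VS.

Definition sdual (S : gsubspace) n := 'Hom(subvs_of (S n), K^o).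

Definition sev (S : gsubspace) n (f : sdual S n) (x : 'rV[K]_(d n)) : K :=
  f (vsproj (S n) x).

(* F : H^* -> S^* is a degree-preserving (linear) morphism of graded
   Hopf algebras (bialgebra morphism), which is surjective with kernel I:
   equivalently, F induces an isomorphism of graded Hopf algebras
   H^*/I ~ S^*. *)
Definition iso_data (S : gsubspace) (I : forall n, {vspace 'rV[K]_(d n)})
    (F : forall n, {linear 'rV[K]_(d n) -> sdual S n}) : Prop :=
  [/\
      (forall n (g : sdual S n), exists a, F n a = g),
      (forall n a, F n a = 0 <-> a \in I n) &
     [/\
      (* multiplicative: F(ab) = F(a) F(b), product of S^* dual to Delta_S *)
      (forall p q a b x, x \in S (p + q)%N ->
         sev S (p + q)%N (F (p + q)%N (dmul p q (p + q) a b)) x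
         = \sum_i \sum_j comulm p q (p + q) x i j
             * sev S p (F p a) (drow p i) * sev S q (F q b) (drow q j)),
      (* unital: F(1_{H^*}) = 1_{S^*}, i.e. F(eps) = eps restricted to S *)
      (forall x, x \in S 0%N ->
         sev S 0%N (F 0%N (const_mx 1)) x = \sum_i x 0 i),
      (* comultiplicative: Delta_{S^*}(F a) = (F (x) F)(Delta_{H^*} a),
         coproduct of S^* dual to the product of S *)
      (forall p q a x y, x \in S p -> y \in S q ->
         sev S (p + q)%N (F (p + q)%N a) (hmul p q (p + q) x y)
         = \sum_i \sum_j dcomulm p q (p + q) a i j
             * sev S p (F p (drow p i)) x * sev S q (F q (drow q j)) y) &
      (* counital: eps_{S^*}(F a) = (F a)(1) = a(1) = eps_{H^*}(a) *)
      (forall a : 'rV[K]_(d 0),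
         sev S 0%N (F 0%N a) (const_mx 1) = \sum_i a 0 i) ] ].

End GHopf.
Arguments is_gcHopf {K} H.
Arguments lfun {K} H.
Arguments gsubspace {K} H.

(* Main.v *)
Require Import Defs.
From HB Require Import structures.
From mathcomp Require Import all_boot all_order all_algebra.
From mathcomp Require Import ring zify.
Local Open Scope ring_scope.

Module Aux.
Set Implicit Arguments. Unset Strict Implicit. Unset Printing Implicit Defensive.
Import GRing.Theory.

Section LA.
Context {K : fieldType}.

Definition ev m (a x : 'rV[K]_m) : K := \sum_i x 0 i * a 0 i.

Lemma evC m (a x : 'rV[K]_m) : ev a x = ev x a.
Proof. by apply: eq_bigr => i _; rewrite mulrC. Qed.

Lemma ev_suml m I r (P : pred I) (F : I -> 'rV[K]_m) x :
  ev (\sum_(i <- r | P i) F i) x = \sum_(i <- r | P i) ev (F i) x.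
Proof.
rewrite /ev; under eq_bigr do rewrite summxE mulr_sumr.
by rewrite exchange_big.
Qed.

Lemma ev_sumr m I r (P : pred I) (F : I -> 'rV[K]_m) x :
  ev x (\sum_(i <- r | P i) F i) = \sum_(i <- r | P i) ev x (F i).
Proof. by rewrite evC ev_suml; apply: eq_bigr => i _; rewrite evC. Qed.

Lemma evZl m k (a x : 'rV[K]_m) : ev (k *: a) x = k * ev a x.
Proof. by rewrite /ev mulr_sumr; apply: eq_bigr => i _; rewrite mxE mulrCA. Qed.
Lemma evZr m k (a x : 'rV[K]_m) : ev x (k *: a) = k * ev x a.
Proof. by rewrite evC evZl evC. Qed.
Lemma evDl m (a b x : 'rV[K]_m) : ev (a + b) x = ev a x + ev b x.
Proof. by rewrite /ev -big_split; apply: eq_bigr => i _; rewrite mxE mulrDr. Qed.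
Lemma evDr m (a b x : 'rV[K]_m) : ev x (a + b) = ev x a + ev x b.
Proof. by rewrite evC evDl !(evC x). Qed.
Lemma evNl m (a x : 'rV[K]_m) : ev (- a) x = - ev a x.
Proof. by rewrite -scaleN1r evZl mulN1r. Qed.
Lemma evBl m (a b x : 'rV[K]_m) : ev (a - b) x = ev a x - ev b x.
Proof. by rewrite evDl evNl. Qed.
Lemma ev0l m (x : 'rV[K]_m) : ev 0 x = 0.
Proof. by rewrite /ev big1 // => i _; rewrite mxE mulr0. Qed.
Lemma ev0r m (x : 'rV[K]_m) : ev x 0 = 0.
Proof. by rewrite evC ev0l. Qed.
Lemma ev_deltal m (x : 'rV[K]_m) i : ev (delta_mx 0 i) x = x 0 i.
Proof.
rewrite /ev (bigD1 i) //= mxE !eqxx mulr1 big1 ?addr0 // => j /negPf nji.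
by rewrite mxE nji andbF mulr0.
Qed.
Lemma ev_deltar m (x : 'rV[K]_m) i : ev x (delta_mx 0 i) = x 0 i.
Proof. by rewrite evC ev_deltal. Qed.

Lemma row_proj_exp m (U : {vspace 'rV[K]_m}) c : c \in U ->
  c = \sum_k c 0 k *: projv U (delta_mx 0 k).
Proof.
move=> cU; rewrite -{1}(projv_id cU) {1}(row_sum_delta c) linear_sum.
by apply: eq_bigr => k _; rewrite linearZ.
Qed.

Definition annmx m (U : {vspace 'rV[K]_m}) : 'M[K]_m :=
  \matrix_(i, k) (projv U (delta_mx 0 k)) 0 i.
Definition ann m (U : {vspace 'rV[K]_m}) : {vspace 'rV[K]_m} :=
  lker (linfun (mulmxr (annmx U))).

Lemma mem_annP m (U : {vspace 'rV[K]_m}) x :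
  reflect (forall c, c \in U -> ev c x = 0) (x \in ann U).
Proof.
rewrite /ann memv_ker lfunE /=.
have E k : (x *m annmx U) 0 k = ev (projv U (delta_mx 0 k)) x.
  by rewrite !mxE; apply: eq_bigr => i _; rewrite mxE.
apply: (iffP eqP) => [H0 c cU | H0].
  rewrite (row_proj_exp cU) ev_suml big1 // => k _.
  by rewrite evZl -E H0 mxE mulr0.
by apply/rowP => k; rewrite E mxE H0 // memv_proj.
Qed.

Lemma ev_lin_row m (f : 'End('rV[K]_m)) k0 c :
  ev c (\row_i (f (delta_mx 0 i)) 0 k0) = (f c) 0 k0.
Proof.
rewrite {2}(row_sum_delta c) linear_sum summxE /ev.
by apply: eq_bigr => i _; rewrite linearZ !mxE mulrC.
Qed.

Lemma ann_ann m (U : {vspace 'rV[K]_m}) a :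
  (forall x, x \in ann U -> ev a x = 0) -> a \in U.
Proof.
move=> H0; apply/negPn/negP => aU.
pose f : 'End('rV[K]_m) := (\1 - projv U)%VF.
have fE c : f c = c - projv U c by rewrite /f add_lfunE opp_lfunE id_lfunE.
have bne : f a != 0.
  by rewrite fE subr_eq0; apply: contra aU => /eqP ->; apply: memv_proj.
have [k0 Hk] : exists k, (f a) 0 k != 0.
  apply/existsP; apply: contraR bne => /existsPn Hn.
  by apply/eqP/rowP => k; rewrite mxE; apply/eqP/negPn/Hn.
pose x := \row_i (f (delta_mx 0 i)) 0 k0.
have : ev a x = 0.
  apply: H0; apply/mem_annP => c cU.
  by rewrite ev_lin_row fE projv_id // subrr mxE.
by rewrite ev_lin_row; apply/eqP.
Qed.

Definition colv m n (M : 'M[K]_(m, n)) j : 'rV[K]_m := \row_i M i j.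

Definition tens m n (U : {vspace 'rV[K]_m}) (V : {vspace 'rV[K]_n}) (M : 'M[K]_(m, n)) :=
  (forall j, colv M j \in U) /\ (forall i, row i M \in V).

Definition bil m n (M : 'M[K]_(m, n)) (a : 'rV[K]_m) (b : 'rV[K]_n) : K :=
  \sum_i \sum_j M i j * a 0 i * b 0 j.

Lemma trmul_row m n (u : 'rV[K]_m) (v : 'rV[K]_n) i j :
  (u^T *m v) i j = u 0 i * v 0 j.
Proof. by rewrite !mxE big_ord1 mxE. Qed.

Lemma in_tensor_tens m n U V M : in_tensor m n U V M -> @tens m n U V M.
Proof.
case=> s [Hs ->]; split.
  move=> j; have -> : colv (\sum_(uv <- s) uv.1^T *m uv.2) j =
                      \sum_(uv <- s) uv.2 0 j *: uv.1.
    apply/rowP => i; rewrite mxE !summxE; apply: eq_bigr => uv _.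
    by rewrite trmul_row mxE mulrC.
  by rewrite big_seq; apply: rpred_sum => uv /Hs [h1 _]; apply: rpredZ.
move=> i; have -> : row i (\sum_(uv <- s) uv.1^T *m uv.2) =
                    \sum_(uv <- s) uv.1 0 i *: uv.2.
  apply/rowP => j; rewrite mxE !summxE; apply: eq_bigr => uv _.
  by rewrite trmul_row mxE.
by rewrite big_seq; apply: rpred_sum => uv /Hs [_ h2]; apply: rpredZ.
Qed.

Lemma tens_in_tensor m n U V M : @tens m n U V M -> in_tensor m n U V M.
Proof.
case=> Hc Hr.
exists [seq (projv U (delta_mx 0 i), row i M) | i <- enum 'I_m]; split.
  by move=> uv /mapP [i _ ->] /=; split; [apply: memv_proj | apply: Hr].
rewrite big_map big_enum /=; apply/matrixP => a j.
rewrite summxE.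
have -> : M a j = (projv U (colv M j)) 0 a by rewrite projv_id // mxE.
rewrite {1}[colv M j]row_sum_delta linear_sum summxE.
apply: eq_bigr => i _; rewrite trmul_row linearZ !mxE mulrC.
by [].
Qed.

Lemma tens_bil m n U V M (a a' : 'rV[K]_m) (b b' : 'rV[K]_n) :
  @tens m n U V M ->
  (forall u, u \in U -> ev a u = ev a' u) ->
  (forall v, v \in V -> ev b v = ev b' v) ->
  bil M a b = bil M a' b'.
Proof.
case=> Hc Hr Ha Hb.
have E1 (a0 : 'rV[K]_m) b0 : bil M a0 b0 = \sum_j b0 0 j * ev a0 (colv M j).
  rewrite /bil exchange_big; apply: eq_bigr => j _.
  rewrite mulr_sumr; apply: eq_bigr => i _.
  by rewrite mxE mulrC mulrA.
have E2 (a0 : 'rV[K]_m) b0 : bil M a0 b0 = \sum_i a0 0 i * ev b0 (row i M).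
  rewrite /bil; apply: eq_bigr => i _.
  rewrite mulr_sumr; apply: eq_bigr => j _.
  by rewrite mxE mulrA [a0 0 i * _]mulrC.
rewrite E1 (eq_bigr (fun j => b 0 j * ev a' (colv M j))); last first.
  by move=> j _; rewrite Ha.
rewrite -E1 E2 (eq_bigr (fun i => a' 0 i * ev b' (row i M))) -?E2 //.
by move=> i _; rewrite Hb.
Qed.


Lemma bil_deltar m n (M : 'M[K]_(m, n)) a j : bil M a (delta_mx 0 j) = \sum_i M i j * a 0 i.
Proof.
apply: eq_bigr => i _; rewrite (bigD1 j) //= mxE !eqxx mulr1 big1 ?addr0 // => j' /negPf nj.
by rewrite mxE nj andbF mulr0.
Qed.
Lemma bil_deltal m n (M : 'M[K]_(m, n)) b i : bil M (delta_mx 0 i) b = \sum_j M i j * b 0 j.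
Proof.
rewrite /bil (bigD1 i) //= [X in _ + X]big1 ?addr0.
  by apply: eq_bigr => j _; rewrite mxE !eqxx mulr1.
move=> i' /negPf ni; apply: big1 => j _.
by rewrite mxE ni andbF mulr0 mul0r.
Qed.
Definition evsub m (U : {vspace 'rV[K]_m}) (a : 'rV[K]_m) : subvs_of U -> K^o :=
  fun u => ev a (vsval u).

Lemma evsub_lin m U a : linear (@evsub m U a).
Proof.
move=> k u v; rewrite /evsub /ev linearP /= scaler_sumr -big_split /=.
by apply: eq_bigr => i _; rewrite !mxE mulrDl -mulrA.
Qed.
HB.instance Definition _ m U a :=
  GRing.isLinear.Build K (subvs_of U) K^o *:%R (@evsub m U a) (@evsub_lin m U a).

Definition Fm m U (a : 'rV[K]_m) : 'Hom(subvs_of U, K^o) := linfun (@evsub m U a).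

Lemma FmE m U a u : @Fm m U a u = ev a (vsval u).
Proof. by rewrite /Fm lfunE. Qed.

Lemma Fm_lin m U : linear (@Fm m U).
Proof.
move=> k a b; apply/lfunP => u; rewrite add_lfunE scale_lfunE !FmE /ev.
rewrite /= scaler_sumr -big_split; apply: eq_bigr => i _.
by rewrite !mxE mulrDr mulrCA.
Qed.
HB.instance Definition _ m U :=
  GRing.isLinear.Build K 'rV[K]_m 'Hom(subvs_of U, K^o) *:%R (@Fm m U) (@Fm_lin m U).

Lemma vsvalproj m (U : {vspace 'rV[K]_m}) x : vsval (vsproj U x) = projv U x.
Proof. by rewrite unlock. Qed.

Lemma ev_projrow m (U : {vspace 'rV[K]_m}) a u :
  ev (\row_i ev a (projv U (delta_mx 0 i))) u = ev a (projv U u).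
Proof.
rewrite {2}(row_sum_delta u) linear_sum ev_sumr; apply: eq_bigr => i _.
by rewrite linearZ evZr mxE.
Qed.

End LA.


Lemma reorder4 (R : nmodType) (I1 I2 I3 I4 : finType) (F : I1 -> I2 -> I3 -> I4 -> R) :
  \sum_a \sum_b \sum_c \sum_e F a b c e = \sum_b \sum_c \sum_e \sum_a F a b c e.
Proof.
rewrite exchange_big; apply: eq_bigr => b _.
rewrite exchange_big; apply: eq_bigr => c _.
by rewrite exchange_big.
Qed.

Lemma reorder3 (R : nmodType) (I1 I2 I3 : finType) (F : I1 -> I2 -> I3 -> R) :
  \sum_a \sum_b \sum_c F a b c = \sum_b \sum_c \sum_a F a b c.
Proof. by rewrite exchange_big; apply: eq_bigr => b _; rewrite exchange_big. Qed.


Lemma rot5 (R : nmodType) (I0 I1 I2 I3 I4 : finType) (F : I0 -> I1 -> I2 -> I3 -> I4 -> R) :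
  \sum_x \sum_a \sum_b \sum_c \sum_e F x a b c e = \sum_a \sum_b \sum_c \sum_e \sum_x F x a b c e.
Proof. by rewrite exchange_big; apply: eq_bigr => a _; rewrite (reorder4 (fun x b c e => F x a b c e)). Qed.

Lemma mv2 (R : nmodType) (I J I1 I2 I3 I4 : finType) (F : I -> J -> I1 -> I2 -> I3 -> I4 -> R) :
  \sum_i \sum_j \sum_a \sum_b \sum_c \sum_e F i j a b c e =
  \sum_a \sum_b \sum_c \sum_e \sum_i \sum_j F i j a b c e.
Proof.
under eq_bigr => i _ do rewrite rot5.
by rewrite (rot5 (fun i a b c e => \sum_j F i j a b c e)).
Qed.

Lemma perm4 (R : nmodType) (I1 I2 I3 I4 : finType) (F : I1 -> I2 -> I3 -> I4 -> R) :
  \sum_a \sum_b \sum_c \sum_e F a b c e = \sum_c \sum_a \sum_e \sum_b F a b c e.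
Proof.
rewrite (reorder3 (fun a b c => \sum_e F a b c e)) exchange_big.
apply: eq_bigr => c _; exact: (reorder3 (fun b a e => F a b c e)).
Qed.

Section Pull.
Context (R : comNzRingType) (I J I1 I2 J1 J2 : finType) (u : I -> R) (w : J -> R)
  (A : I1 -> I2 -> I -> R) (B : J1 -> J2 -> J -> R) (C : I1 -> J1 -> R) (D : I2 -> J2 -> R).

Let N := \sum_i1 \sum_i2 \sum_j1 \sum_j2 \sum_i \sum_j
   u i * w j * A i1 i2 i * B j1 j2 j * C i1 j1 * D i2 j2.

Let L0 : \sum_i \sum_j u i * w j * (\sum_i1 \sum_i2 \sum_j1 \sum_j2
    A i1 i2 i * B j1 j2 j * C i1 j1 * D i2 j2) = N.
Proof.
rewrite /N -(mv2 (fun i j i1 i2 j1 j2 => u i * w j * A i1 i2 i * B j1 j2 j * C i1 j1 * D i2 j2)).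
apply: eq_bigr => i _; apply: eq_bigr => j _.
rewrite mulr_sumr; apply: eq_bigr => i1 _; rewrite mulr_sumr; apply: eq_bigr => i2 _.
rewrite mulr_sumr; apply: eq_bigr => j1 _; rewrite mulr_sumr; apply: eq_bigr => j2 _.
by rewrite !mulrA.
Qed.

Let E0 i1 i2 j1 j2 : (\sum_i u i * A i1 i2 i) * (\sum_j w j * B j1 j2 j) =
  \sum_i \sum_j u i * w j * A i1 i2 i * B j1 j2 j.
Proof.
rewrite mulr_suml; apply: eq_bigr => i _; rewrite mulr_sumr; apply: eq_bigr => j _.
by rewrite mulrACA mulrA.
Qed.

Lemma pull_col : \sum_i \sum_j u i * w j * (\sum_i1 \sum_i2 \sum_j1 \sum_j2
    A i1 i2 i * B j1 j2 j * C i1 j1 * D i2 j2) =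
  \sum_i2 \sum_j2 D i2 j2 * (\sum_i1 \sum_j1
     (\sum_i u i * A i1 i2 i) * (\sum_j w j * B j1 j2 j) * C i1 j1).
Proof.
rewrite L0 /N.
rewrite -(perm4 (fun i2 j2 i1 j1 => \sum_i \sum_j u i * w j * A i1 i2 i * B j1 j2 j * C i1 j1 * D i2 j2)).
apply: eq_bigr => i2 _; apply: eq_bigr => j2 _; rewrite mulr_sumr.
apply: eq_bigr => i1 _; rewrite mulr_sumr; apply: eq_bigr => j1 _.
rewrite E0 mulr_suml mulr_sumr; apply: eq_bigr => i _.
rewrite mulr_suml mulr_sumr; apply: eq_bigr => j _.
by rewrite mulrC.
Qed.

Lemma pull_row : \sum_i \sum_j u i * w j * (\sum_i1 \sum_i2 \sum_j1 \sum_j2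
    A i1 i2 i * B j1 j2 j * C i1 j1 * D i2 j2) =
  \sum_i1 \sum_j1 C i1 j1 * (\sum_i2 \sum_j2
     (\sum_i u i * A i1 i2 i) * (\sum_j w j * B j1 j2 j) * D i2 j2).
Proof.
rewrite L0 /N; apply: eq_bigr => i1 _; rewrite exchange_big.
apply: eq_bigr => j1 _; rewrite mulr_sumr; apply: eq_bigr => i2 _.
rewrite mulr_sumr; apply: eq_bigr => j2 _.
rewrite E0 mulr_suml mulr_sumr; apply: eq_bigr => i _.
rewrite mulr_suml mulr_sumr; apply: eq_bigr => j _.
by rewrite [LHS]mulrAC [LHS]mulrC.
Qed.
End Pull.

Section Hopf.
Context {K : fieldType} (H : gHopfData K) (HH : is_gcHopf H).
Local Notation d := (hdim H).
Local Notation mc := (smc H).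
Local Notation dc := (sdc H).

Lemma d0 : d 0 = 1%N. Proof. by case: HH. Qed.
Lemma mc_gr p q n i j k : n != (p + q)%N -> mc p q n i j k = 0.
Proof. by case: HH => _ [h _]; apply: h. Qed.
Lemma dc_gr p q n i j k : n != (p + q)%N -> dc p q n i j k = 0.
Proof. by case: HH => _ [_ [h _]]; apply: h. Qed.
Lemma dc_coassoc p q r n i j k t :
  \sum_(l : 'I_(d (p + q))) dc (p + q) r n l k t * dc p q (p + q) i j l
  = \sum_(l : 'I_(d (q + r))) dc p (q + r) n i l t * dc q r (q + r) j k l.
Proof. by case: HH => _ [_ [_ [_ [_ [_ [h _]]]]]]; apply: h. Qed.
Lemma dc_counitl q n (i0 : 'I_(d 0)) j k :
  dc 0 q n i0 j k = ((n == q) && (val j == val k))%:R.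
Proof. by case: HH => _ [_ [_ [_ [_ [_ [_ [h _]]]]]]]; apply: h. Qed.
Lemma dc_counitr p n (i0 : 'I_(d 0)) i k :
  dc p 0 n i i0 k = ((n == p) && (val i == val k))%:R.
Proof. by case: HH => _ [_ [_ [_ [_ [_ [_ [_ [h _]]]]]]]]; apply: h. Qed.
Lemma bimult p q a b i j s t :
  \sum_(k : 'I_(d (p + q))) mc p q (p + q) i j k * dc a b (p + q) s t k
  = \sum_(p1 < p.+1) \sum_(q1 < q.+1)
      \sum_(i1 : 'I_(d p1)) \sum_(i2 : 'I_(d (p - p1)))
      \sum_(j1 : 'I_(d q1)) \sum_(j2 : 'I_(d (q - q1)))
        dc p1 (p - p1) p i1 i2 i * dc q1 (q - q1) q j1 j2 j
        * mc p1 q1 a i1 j1 s * mc (p - p1) (q - q1) b i2 j2 t.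
Proof. by case: HH => _ [_ [_ [_ [_ [_ [_ [_ [_ [h _]]]]]]]]]; apply: h. Qed.

Lemma dmul_gr p q n (f : 'rV[K]_(d p)) (g : 'rV[K]_(d q)) :
  n != (p + q)%N -> dmul p q n f g = 0.
Proof.
move=> nE; apply/rowP => k; rewrite !mxE big1 // => i _; rewrite big1 // => j _.
by rewrite dc_gr // !mul0r.
Qed.

Lemma hmul_gr p q n (f : 'rV[K]_(d p)) (g : 'rV[K]_(d q)) :
  n != (p + q)%N -> hmul p q n f g = 0.
Proof.
move=> nE; apply/rowP => k; rewrite !mxE big1 // => i _; rewrite big1 // => j _.
by rewrite mc_gr // !mulr0.
Qed.

Definition dmulL p q n (g : 'rV[K]_(d q)) (f : 'rV[K]_(d p)) : 'rV[K]_(d n) := dmul p q n f g.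
Definition dmulR p q n (f : 'rV[K]_(d p)) (g : 'rV[K]_(d q)) : 'rV[K]_(d n) := dmul p q n f g.
Definition hmulL p q n (g : 'rV[K]_(d q)) (f : 'rV[K]_(d p)) : 'rV[K]_(d n) := hmul p q n f g.
Definition hmulR p q n (f : 'rV[K]_(d p)) (g : 'rV[K]_(d q)) : 'rV[K]_(d n) := hmul p q n f g.

Lemma dmulL_lin p q n g : linear (@dmulL p q n g).
Proof.
move=> k x y; apply/rowP => t; rewrite !mxE mulr_sumr -big_split.
apply: eq_bigr => i _; rewrite mulr_sumr -big_split; apply: eq_bigr => j _.
by rewrite !mxE /=; ring.
Qed.
Lemma dmulR_lin p q n f : linear (@dmulR p q n f).
Proof.
move=> k x y; apply/rowP => t; rewrite !mxE mulr_sumr -big_split.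
apply: eq_bigr => i _; rewrite mulr_sumr -big_split; apply: eq_bigr => j _.
by rewrite !mxE /=; ring.
Qed.
Lemma hmulL_lin p q n g : linear (@hmulL p q n g).
Proof.
move=> k x y; apply/rowP => t; rewrite !mxE mulr_sumr -big_split.
apply: eq_bigr => i _; rewrite mulr_sumr -big_split; apply: eq_bigr => j _.
by rewrite !mxE /=; ring.
Qed.
Lemma hmulR_lin p q n f : linear (@hmulR p q n f).
Proof.
move=> k x y; apply/rowP => t; rewrite !mxE mulr_sumr -big_split.
apply: eq_bigr => i _; rewrite mulr_sumr -big_split; apply: eq_bigr => j _.
by rewrite !mxE /=; ring.
Qed.

HB.instance Definition _ p q n g := GRing.isLinear.Build K 'rV[K]_(d p) 'rV[K]_(d n) *:%R (@dmulL p q n g) (@dmulL_lin p q n g).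
HB.instance Definition _ p q n f := GRing.isLinear.Build K 'rV[K]_(d q) 'rV[K]_(d n) *:%R (@dmulR p q n f) (@dmulR_lin p q n f).
HB.instance Definition _ p q n g := GRing.isLinear.Build K 'rV[K]_(d p) 'rV[K]_(d n) *:%R (@hmulL p q n g) (@hmulL_lin p q n g).
HB.instance Definition _ p q n f := GRing.isLinear.Build K 'rV[K]_(d q) 'rV[K]_(d n) *:%R (@hmulR p q n f) (@hmulR_lin p q n f).

Lemma dmul_suml p q n I r (P : pred I) (F : I -> 'rV[K]_(d p)) g :
  dmul p q n (\sum_(i <- r | P i) F i) g = \sum_(i <- r | P i) dmul p q n (F i) g.
Proof. exact: (linear_sum (@dmulL p q n g)). Qed.
Lemma dmul_sumr p q n I r (P : pred I) (F : I -> 'rV[K]_(d q)) f :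
  dmul p q n f (\sum_(i <- r | P i) F i) = \sum_(i <- r | P i) dmul p q n f (F i).
Proof. exact: (linear_sum (@dmulR p q n f)). Qed.
Lemma dmulZl p q n k (f : 'rV[K]_(d p)) (g : 'rV[K]_(d q)) :
  dmul p q n (k *: f) g = k *: dmul p q n f g.
Proof. by change (@dmulL p q n g (k *: f) = k *: @dmulL p q n g f); rewrite linearZ. Qed.
Lemma dmulZr p q n k (f : 'rV[K]_(d p)) (g : 'rV[K]_(d q)) :
  dmul p q n f (k *: g) = k *: dmul p q n f g.
Proof. by change (@dmulR p q n f (k *: g) = k *: @dmulR p q n f g); rewrite linearZ. Qed.
Lemma dmul0l p q n (g : 'rV[K]_(d q)) : dmul p q n 0 g = 0.
Proof. by change (@dmulL p q n g 0 = 0); rewrite linear0. Qed.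
Lemma dmul0r p q n (f : 'rV[K]_(d p)) : dmul p q n f 0 = 0.
Proof. by change (@dmulR p q n f 0 = 0); rewrite linear0. Qed.
Lemma hmul_suml p q n I r (P : pred I) (F : I -> 'rV[K]_(d p)) g :
  hmul p q n (\sum_(i <- r | P i) F i) g = \sum_(i <- r | P i) hmul p q n (F i) g.
Proof. exact: (linear_sum (@hmulL p q n g)). Qed.
Lemma hmul_sumr p q n I r (P : pred I) (F : I -> 'rV[K]_(d q)) f :
  hmul p q n f (\sum_(i <- r | P i) F i) = \sum_(i <- r | P i) hmul p q n f (F i).
Proof. exact: (linear_sum (@hmulR p q n f)). Qed.
Lemma hmulZl p q n k (f : 'rV[K]_(d p)) (g : 'rV[K]_(d q)) :
  hmul p q n (k *: f) g = k *: hmul p q n f g.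
Proof. by change (@hmulL p q n g (k *: f) = k *: @hmulL p q n g f); rewrite linearZ. Qed.
Lemma hmulZr p q n k (f : 'rV[K]_(d p)) (g : 'rV[K]_(d q)) :
  hmul p q n f (k *: g) = k *: hmul p q n f g.
Proof. by change (@hmulR p q n f (k *: g) = k *: @hmulR p q n f g); rewrite linearZ. Qed.

Lemma dmulA a b c n (f : 'rV[K]_(d a)) (g : 'rV[K]_(d b)) (h : 'rV[K]_(d c)) :
  dmul (a + b) c n (dmul a b (a + b) f g) h = dmul a (b + c) n f (dmul b c (b + c) g h).
Proof.
apply/rowP => t; rewrite !mxE.
transitivity (\sum_i \sum_j \sum_k f 0 i * g 0 j * h 0 k *
   \sum_(l : 'I_(d (a + b))) dc (a + b) c n l k t * dc a b (a + b) i j l).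
  transitivity (\sum_(l : 'I_(d (a + b))) \sum_k \sum_i \sum_j
     dc (a + b) c n l k t * dc a b (a + b) i j l * (f 0 i * g 0 j * h 0 k)).
    apply: eq_bigr => l _; apply: eq_bigr => k _.
    rewrite mxE mulr_sumr mulr_suml; apply: eq_bigr => i _.
    rewrite mulr_sumr mulr_suml; apply: eq_bigr => j _; ring.
  rewrite reorder4 exchange_big; apply: eq_bigr => i _.
  rewrite exchange_big; apply: eq_bigr => j _; apply: eq_bigr => k _.
  by rewrite mulr_sumr; apply: eq_bigr => l _; rewrite mulrC.
apply/esym.
transitivity (\sum_i \sum_(l : 'I_(d (b + c))) \sum_j \sum_k
   dc a (b + c) n i l t * dc b c (b + c) j k l * (f 0 i * g 0 j * h 0 k)).
  apply: eq_bigr => i _; apply: eq_bigr => l _.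
  rewrite mxE mulr_sumr; apply: eq_bigr => j _.
  rewrite mulr_sumr; apply: eq_bigr => k _; ring.
apply: eq_bigr => i _; rewrite reorder3; apply: eq_bigr => j _.
apply: eq_bigr => k _; rewrite dc_coassoc mulr_sumr.
by apply: eq_bigr => l _; rewrite mulrC.
Qed.

Lemma dmul_unitl n (i0 : 'I_(d 0)) (f : 'rV[K]_(d n)) : dmul 0 n n (drow 0 i0) f = f.
Proof.
apply/rowP => k; rewrite /drow mxE (bigD1 i0) //= [X in _ + X]big1 ?addr0.
  rewrite (bigD1 k) //= [X in _ + X]big1 ?addr0.
    by rewrite dc_counitl !eqxx mxE !eqxx mulr1 mul1r.
  move=> j /negPf nj.
  by rewrite dc_counitl eqxx /= (inj_eq val_inj) nj mul0r mul0r.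
move=> i /negPf ni; apply: big1 => j _.
by rewrite mxE ni andbF mulr0 mul0r.
Qed.

Lemma dmul_unitr n (i0 : 'I_(d 0)) (f : 'rV[K]_(d n)) : dmul n 0 n f (drow 0 i0) = f.
Proof.
apply/rowP => k; rewrite /drow mxE (bigD1 k) //= [X in _ + X]big1 ?addr0.
  rewrite (bigD1 i0) //= [X in _ + X]big1 ?addr0.
    by rewrite dc_counitr !eqxx mxE !eqxx mulr1 mul1r.
  move=> j /negPf nj.
  by rewrite mxE nj andbF mulr0.
move=> i /negPf ni; apply: big1 => j _.
by rewrite dc_counitr eqxx /= (inj_eq val_inj) ni !mul0r.
Qed.

Lemma ev_dmul p q n (f : 'rV[K]_(d p)) (g : 'rV[K]_(d q)) x :
  ev (dmul p q n f g) x = bil (comulm p q n x) f g.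
Proof.
rewrite /ev /bil.
transitivity (\sum_k \sum_i \sum_j x 0 k * dc p q n i j k * f 0 i * g 0 j).
  apply: eq_bigr => k _; rewrite mxE mulr_sumr; apply: eq_bigr => i _.
  by rewrite mulr_sumr; apply: eq_bigr => j _; rewrite !mulrA.
rewrite reorder3; apply: eq_bigr => i _; apply: eq_bigr => j _.
by rewrite mxE !mulr_suml.
Qed.

Lemma ev_hmul p q n a (x : 'rV[K]_(d p)) (y : 'rV[K]_(d q)) :
  ev a (hmul p q n x y) = bil (dcomulm p q n a) x y.
Proof.
rewrite /ev /bil.
transitivity (\sum_k \sum_i \sum_j mc p q n i j k * a 0 k * x 0 i * y 0 j).
  apply: eq_bigr => k _; rewrite mxE mulr_suml; apply: eq_bigr => i _.
  by rewrite mulr_suml; apply: eq_bigr => j _; ring.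
rewrite reorder3; apply: eq_bigr => i _; apply: eq_bigr => j _.
by rewrite mxE !mulr_suml.
Qed.

Lemma ev_colv p q n x c j :
  ev c (colv (comulm p q n x) j) = ev (dmul p q n c (@drow K H q j)) x.
Proof.
rewrite ev_dmul bil_deltar; apply: eq_bigr => i _; by rewrite !mxE.
Qed.

Lemma ev_row p q n x c i :
  ev c (row i (comulm p q n x)) = ev (dmul p q n (@drow K H p i) c) x.
Proof.
rewrite ev_dmul bil_deltal; apply: eq_bigr => j _; by rewrite !mxE.
Qed.

Lemma lvalE (phi : lfun H) n x : lval phi n x = ev (lcomp phi n) x.
Proof. by apply: eq_bigr => i _; rewrite mxE. Qed.

Lemma char_mul (phi : lfun H) : is_character phi -> forall p q x y,
  ev (lcomp phi (p + q)) (hmul p q (p + q) x y) = ev (lcomp phi p) x * ev (lcomp phi q) y.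
Proof.
case=> _ Hm p q x y; rewrite ev_hmul /bil /ev mulr_suml; apply: eq_bigr => i _.
rewrite mulr_sumr; apply: eq_bigr => j _.
have -> : dcomulm p q (p + q) (lcomp phi (p + q)) i j = phi p i * phi q j.
  by rewrite mxE -Hm; apply: eq_bigr => k _; rewrite mxE.
by rewrite !mxE; ring.
Qed.

Lemma col_comulm_hmul p q a b (u : 'rV[K]_(d p)) (w : 'rV[K]_(d q)) t :
  colv (comulm a b (p + q) (hmul p q (p + q) u w)) t =
  \sum_(p1 < p.+1) \sum_(q1 < q.+1) \sum_(i2 : 'I_(d (p - p1))) \sum_(j2 : 'I_(d (q - q1)))
    mc (p - p1) (q - q1) b i2 j2 t *:
      hmul p1 q1 a (colv (comulm p1 (p - p1) p u) i2) (colv (comulm q1 (q - q1) q w) j2).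
Proof.
apply/rowP => s; rewrite !mxE.
transitivity (\sum_i \sum_j u 0 i * w 0 j *
   \sum_(k : 'I_(d (p + q))) mc p q (p + q) i j k * dc a b (p + q) s t k).
  transitivity (\sum_k \sum_i \sum_j u 0 i * w 0 j * mc p q (p + q) i j k * dc a b (p + q) s t k).
    apply: eq_bigr => k _; rewrite mxE mulr_suml; apply: eq_bigr => i _.
    by rewrite mulr_suml.
  rewrite reorder3; apply: eq_bigr => i _; apply: eq_bigr => j _.
  by rewrite mulr_sumr; apply: eq_bigr => k _; rewrite !mulrA.
under eq_bigr => i _ do under eq_bigr => j _ do rewrite bimult mulr_sumr.
rewrite summxE.
transitivity (\sum_(p1 < p.+1) \sum_i \sum_j u 0 i * w 0 j * \sum_(q1 < q.+1)
      \sum_(i1 : 'I_(d p1)) \sum_(i2 : 'I_(d (p - p1)))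
      \sum_(j1 : 'I_(d q1)) \sum_(j2 : 'I_(d (q - q1)))
        dc p1 (p - p1) p i1 i2 i * dc q1 (q - q1) q j1 j2 j
        * mc p1 q1 a i1 j1 s * mc (p - p1) (q - q1) b i2 j2 t).
  by rewrite [RHS]reorder3.
apply: eq_bigr => p1 _; rewrite summxE.
transitivity (\sum_(q1 < q.+1) \sum_i \sum_j u 0 i * w 0 j * (
      \sum_(i1 : 'I_(d p1)) \sum_(i2 : 'I_(d (p - p1)))
      \sum_(j1 : 'I_(d q1)) \sum_(j2 : 'I_(d (q - q1)))
        dc p1 (p - p1) p i1 i2 i * dc q1 (q - q1) q j1 j2 j
        * mc p1 q1 a i1 j1 s * mc (p - p1) (q - q1) b i2 j2 t)).
  rewrite [RHS]reorder3; apply: eq_bigr => i _; apply: eq_bigr => j _.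
  by rewrite mulr_sumr.
apply: eq_bigr => q1 _; rewrite pull_col summxE.
apply: eq_bigr => i2 _; rewrite summxE; apply: eq_bigr => j2 _.
rewrite !mxE; congr (_ * _); apply: eq_bigr => i1 _; apply: eq_bigr => j1 _.
by rewrite !mxE.
Qed.

Lemma row_comulm_hmul p q a b (u : 'rV[K]_(d p)) (w : 'rV[K]_(d q)) s :
  row s (comulm a b (p + q) (hmul p q (p + q) u w)) =
  \sum_(p1 < p.+1) \sum_(q1 < q.+1) \sum_(i1 : 'I_(d p1)) \sum_(j1 : 'I_(d q1))
    mc p1 q1 a i1 j1 s *:
      hmul (p - p1) (q - q1) b (row i1 (comulm p1 (p - p1) p u)) (row j1 (comulm q1 (q - q1) q w)).
Proof.
apply/rowP => t; rewrite !mxE.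
transitivity (\sum_i \sum_j u 0 i * w 0 j *
   \sum_(k : 'I_(d (p + q))) mc p q (p + q) i j k * dc a b (p + q) s t k).
  transitivity (\sum_k \sum_i \sum_j u 0 i * w 0 j * mc p q (p + q) i j k * dc a b (p + q) s t k).
    apply: eq_bigr => k _; rewrite mxE mulr_suml; apply: eq_bigr => i _.
    by rewrite mulr_suml.
  rewrite reorder3; apply: eq_bigr => i _; apply: eq_bigr => j _.
  by rewrite mulr_sumr; apply: eq_bigr => k _; rewrite !mulrA.
under eq_bigr => i _ do under eq_bigr => j _ do rewrite bimult mulr_sumr.
rewrite summxE.
transitivity (\sum_(p1 < p.+1) \sum_i \sum_j u 0 i * w 0 j * \sum_(q1 < q.+1)
      \sum_(i1 : 'I_(d p1)) \sum_(i2 : 'I_(d (p - p1)))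
      \sum_(j1 : 'I_(d q1)) \sum_(j2 : 'I_(d (q - q1)))
        dc p1 (p - p1) p i1 i2 i * dc q1 (q - q1) q j1 j2 j
        * mc p1 q1 a i1 j1 s * mc (p - p1) (q - q1) b i2 j2 t).
  by rewrite [RHS]reorder3.
apply: eq_bigr => p1 _; rewrite summxE.
transitivity (\sum_(q1 < q.+1) \sum_i \sum_j u 0 i * w 0 j * (
      \sum_(i1 : 'I_(d p1)) \sum_(i2 : 'I_(d (p - p1)))
      \sum_(j1 : 'I_(d q1)) \sum_(j2 : 'I_(d (q - q1)))
        dc p1 (p - p1) p i1 i2 i * dc q1 (q - q1) q j1 j2 j
        * mc p1 q1 a i1 j1 s * mc (p - p1) (q - q1) b i2 j2 t)).
  rewrite [RHS]reorder3; apply: eq_bigr => i _; apply: eq_bigr => j _.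
  by rewrite mulr_sumr.
apply: eq_bigr => q1 _; rewrite pull_row summxE.
apply: eq_bigr => i1 _; rewrite summxE; apply: eq_bigr => j1 _.
rewrite !mxE; congr (_ * _); apply: eq_bigr => i2 _; apply: eq_bigr => j2 _.
by rewrite !mxE.
Qed.

End Hopf.


Lemma mem_sum_sup (F : fieldType) (vT : vectType F) (I : finType) (U : I -> {vspace vT}) i0 v :
  v \in U i0 -> v \in (\sum_i U i)%VS.
Proof. by rewrite !memvE => h; apply: subv_trans h _; apply: (sumv_sup i0). Qed.

Lemma ann_line (F : fieldType) m (c x : 'rV[F]_m) : reflect (ev c x = 0) (x \in ann <[c]>%VS).
Proof.
apply: (iffP (mem_annP _ _)) => [h | h c' /vlineP [k ->]].
  by apply: h; apply: memv_line.
by rewrite evZl h mulr0.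
Qed.

Lemma bil0l (F : fieldType) m n (M : 'M[F]_(m, n)) b : bil M 0 b = 0.
Proof. by rewrite /bil big1 // => i _; rewrite big1 // => j _; rewrite mxE mulr0 mul0r. Qed.
Lemma bil0r (F : fieldType) m n (M : 'M[F]_(m, n)) a : bil M a 0 = 0.
Proof. by rewrite /bil big1 // => i _; rewrite big1 // => j _; rewrite mxE mulr0. Qed.

Section Main.
Context {K : fieldType} (H : gHopfData K) (HH : is_gcHopf H)
  (phi psi : lfun H) (Hphi : is_character phi) (Hpsi : is_character psi)
  (S : gsubspace H) (HS : is_S phi psi S).
Local Notation d := (hdim H).
Local Notation mc := (smc H).
Local Notation dc := (sdc H).

Definition th m : 'rV[K]_(d m) := lcomp phi m - lcomp psi m.

Lemma S_coalg : is_gsubcoalg S. Proof. by case: HS. Qed.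
Lemma S_agree : agree_on phi psi S. Proof. by case: HS. Qed.
Lemma S_max T : is_gsubcoalg T -> agree_on phi psi T -> forall n, (T n <= S n)%VS.
Proof. by case: HS => _ _ h; apply: h. Qed.

Lemma S_tens p q n x : n = (p + q)%N -> x \in S n -> tens (S p) (S q) (comulm p q n x).
Proof.
move=> E xS; subst n; have := S_coalg xS (leq_addr q p).
by move/in_tensor_tens; rewrite addKn.
Qed.

Lemma th_S n x : x \in S n -> ev (th n) x = 0.
Proof. by move=> xS; rewrite evBl -!lvalE S_agree // subrr. Qed.

Definition gen n N p m r (a : 'rV[K]_(d p)) (b : 'rV[K]_(d r)) : 'rV[K]_(d n) :=
  dmul N r n (dmul p m N a (th m)) b.
Arguments gen n N p m r a b : clear implicits.

Lemma inner_S p m N a u : u \in S N -> ev (@dmul K H p m N a (th m)) u = 0.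
Proof.
move=> uS; case: (eqVneq N (p + m)%N) => [E | ne]; last by rewrite dmul_gr // ev0l.
have Em : m = (N - p)%N by rewrite E addKn.
subst m; rewrite ev_dmul (@tens_bil _ _ _ _ _ _ a a _ 0 (S_tens E uS)) ?bil0r //.
by move=> v vS; rewrite ev0l th_S.
Qed.

Lemma gen_S n N p m r a b x : x \in S n -> ev (gen n N p m r a b) x = 0.
Proof.
move=> xS; case: (eqVneq n (N + r)%N) => [E | ne]; last by rewrite /gen dmul_gr // ev0l.
have Er : r = (n - N)%N by rewrite E addKn.
subst r; rewrite /gen ev_dmul.
rewrite (@tens_bil _ _ _ _ _ _ _ 0 b b (S_tens E xS)) ?bil0l //.
by move=> u uS; rewrite ev0l inner_S.
Qed.

Definition J n : {vspace 'rV[K]_(d n)} :=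
  (\sum_(N < n.+1) \sum_(p < n.+1) \sum_(m < n.+1) \sum_(r < n.+1)
     \sum_(i : 'I_(d p)) \sum_(j : 'I_(d r))
       <[gen n N p m r (drow p i) (drow r j)]>)%VS.

Lemma J_sub n (W : {vspace 'rV[K]_(d n)}) :
  (forall N p m r (i : 'I_(d p)) (j : 'I_(d r)), gen n N p m r (drow p i) (drow r j) \in W) ->
  (J n <= W)%VS.
Proof.
move=> HW.
apply/subv_sumP => N _; apply/subv_sumP => p _; apply/subv_sumP => m _.
apply/subv_sumP => r _; apply/subv_sumP => i _; apply/subv_sumP => j _.
by rewrite -memvE.
Qed.

Lemma gen_J n N p m r a b : gen n N p m r a b \in J n.
Proof.
case: (eqVneq n (N + r)%N) => [E | ne]; last by rewrite /gen dmul_gr // mem0v.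
case: (eqVneq N (p + m)%N) => [E2 | ne2]; last by rewrite /gen [dmul p m N _ _](dmul_gr HH) // dmul0l mem0v.
have hN : (N < n.+1)%N by rewrite ltnS E leq_addr.
have hp : (p < n.+1)%N by rewrite ltnS E E2 -addnA leq_addr.
have hm : (m < n.+1)%N by rewrite ltnS E E2 -addnA addnC -addnA leq_addr.
have hr : (r < n.+1)%N by rewrite ltnS E leq_addl.
rewrite /gen (row_sum_delta a) (row_sum_delta b) dmul_suml dmul_suml.
apply: rpred_sum => i _; rewrite dmul_sumr; apply: rpred_sum => j _.
rewrite dmulZl dmulZl dmulZr; apply: rpredZ; apply: rpredZ.
rewrite /J; apply: (@mem_sum_sup _ _ _ _ (Ordinal hN)); apply: (@mem_sum_sup _ _ _ _ (Ordinal hp)).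
apply: (@mem_sum_sup _ _ _ _ (Ordinal hm)); apply: (@mem_sum_sup _ _ _ _ (Ordinal hr)).
apply: (@mem_sum_sup _ _ _ _ i); apply: (@mem_sum_sup _ _ _ _ j).
exact: memv_line.
Qed.

Lemma gen_Icomp n N p m r (i : 'I_(d p)) (j : 'I_(d r)) :
  gen n N p m r (drow p i) (drow r j) \in Icomp phi psi n.
Proof.
case: (eqVneq n (N + r)%N) => [E | ne]; last by rewrite /gen dmul_gr // mem0v.
case: (eqVneq N (p + m)%N) => [E2 | ne2]; last by rewrite /gen [dmul p m N _ _](dmul_gr HH) // dmul0l mem0v.
subst N.
have Er : r = (n - m - p)%N by lia.
subst r.
have hm : (m < n.+1)%N by lia.
have hp : (p < (n - m).+1)%N by lia.
rewrite /Icomp; apply: (@mem_sum_sup _ _ _ _ (Ordinal hm)).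
apply: (@mem_sum_sup _ _ _ _ (Ordinal hp)).
apply: (@mem_sum_sup _ _ _ _ i); apply: (@mem_sum_sup _ _ _ _ j).
exact: memv_line.
Qed.

Lemma J_Icomp n : (J n <= Icomp phi psi n)%VS.
Proof. by apply: J_sub => N p m r i j; apply: gen_Icomp. Qed.

Lemma Icomp_J n : (Icomp phi psi n <= J n)%VS.
Proof.
apply/subv_sumP => m _; apply/subv_sumP => p _.
apply/subv_sumP => i _; apply/subv_sumP => j _.
by rewrite -memvE; apply: gen_J.
Qed.

Lemma th_J n : th n \in J n.
Proof.
have h0 : (0 < d 0)%N by rewrite (d0 HH).
have := @gen_J n n 0 n 0 (drow 0 (Ordinal h0)) (drow 0 (Ordinal h0)).
by rewrite /gen dmul_unitl // dmul_unitr.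
Qed.

Lemma J_right s q n c b : c \in J s -> @dmul K H s q n c b \in J n.
Proof.
move=> cJ.
have sub : (J s <= linfun (@dmulL _ H s q n b) @^-1: J n)%VS.
  apply: J_sub => N p m r i j; rewrite -memv_preim lfunE /= /dmulL /gen.
  case: (eqVneq s (N + r)%N) => [E | ne]; last by rewrite [dmul N r s _ _](dmul_gr HH) // dmul0l mem0v.
  subst s; rewrite dmulA //; exact: gen_J.
by move: (subvP sub c cJ); rewrite -memv_preim lfunE.
Qed.

Lemma J_left s q n c b : c \in J s -> @dmul K H q s n b c \in J n.
Proof.
move=> cJ.
have sub : (J s <= linfun (@dmulR _ H q s n b) @^-1: J n)%VS.
  apply: J_sub => N p m r i j; rewrite -memv_preim lfunE /= /dmulR /gen.
  case: (eqVneq s (N + r)%N) => [E | ne]; last by rewrite [dmul N r s _ _](dmul_gr HH) // dmul0r mem0v.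
  subst s; rewrite -dmulA //.
  case: (eqVneq N (p + m)%N) => [E2 | ne2]; last first.
    by rewrite [dmul p m N _ _](dmul_gr HH) // dmul0r dmul0l mem0v.
  subst N; rewrite -dmulA //; exact: gen_J.
by move: (subvP sub c cJ); rewrite -memv_preim lfunE.
Qed.

Lemma J_ev n x : (forall N p m r (i : 'I_(d p)) (j : 'I_(d r)),
    ev (gen n N p m r (drow p i) (drow r j)) x = 0) ->
  forall c, c \in J n -> ev c x = 0.
Proof.
move=> h c cJ.
have sub : (J n <= ann <[x]>)%VS.
  by apply: J_sub => N p m r i j; apply/ann_line; rewrite evC h.
by have /ann_line := subvP sub c cJ; rewrite evC.
Qed.

Definition T : gsubspace H := fun n => ann (J n).

Lemma S_T n x : x \in S n -> x \in T n.
Proof.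
move=> xS; apply/mem_annP; apply: J_ev => N p m r i j; exact: gen_S.
Qed.

Lemma T_agree : agree_on phi psi T.
Proof.
move=> n x /mem_annP h; apply/eqP; rewrite !lvalE -subr_eq0 -evBl.
by apply/eqP; apply: h; apply: th_J.
Qed.

Lemma T_coalg : is_gsubcoalg T.
Proof.
move=> n x /mem_annP xT p pn; apply: tens_in_tensor; split.
  move=> j; apply/mem_annP => c cJ; rewrite ev_colv; apply: xT; exact: J_right.
move=> i; apply/mem_annP => c cJ; rewrite ev_row; apply: xT; exact: J_left.
Qed.

Lemma memST n x : (x \in S n) = (x \in T n).
Proof.
apply/idP/idP; first exact: S_T.
by move=> xT; apply: (subvP (S_max T_coalg T_agree n)).
Qed.

Lemma ker_iff n a : (forall x, x \in S n -> ev a x = 0) <-> a \in Icomp phi psi n.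
Proof.
split => [h | aI x xS].
  apply: (subvP (J_Icomp n)); apply: ann_ann => x xT; apply: h; by rewrite memST.
have aJ := subvP (Icomp_J n) a aI.
by move: xS; rewrite memST => /mem_annP; apply.
Qed.

Definition Q n : {vspace 'rV[K]_(d n)} :=
  (\sum_(p < n.+1) \sum_(q < n.+1) \sum_(i : 'I_(d p)) \sum_(j : 'I_(d q))
     <[hmul p q n (projv (S p) (drow p i)) (projv (S q) (drow q j))]>)%VS.

Lemma Q_sub n (W : {vspace 'rV[K]_(d n)}) :
  (forall p q u w, u \in S p -> w \in S q -> hmul p q n u w \in W) -> (Q n <= W)%VS.
Proof.
move=> h; apply/subv_sumP => p _; apply/subv_sumP => q _.
apply/subv_sumP => i _; apply/subv_sumP => j _.
by rewrite -memvE; apply: h; apply: memv_proj.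
Qed.

Lemma memQ p q n x y : x \in S p -> y \in S q -> hmul p q n x y \in Q n.
Proof.
move=> xS yS.
case: (eqVneq n (p + q)%N) => [E | ne]; last by rewrite hmul_gr // mem0v.
have hp : (p < n.+1)%N by lia.
have hq : (q < n.+1)%N by lia.
rewrite (row_proj_exp xS) (row_proj_exp yS) hmul_suml.
apply: rpred_sum => i _; rewrite hmul_sumr; apply: rpred_sum => j _.
rewrite hmulZl hmulZr; apply: rpredZ; apply: rpredZ.
rewrite /Q; apply: (@mem_sum_sup _ _ _ _ (Ordinal hp)).
apply: (@mem_sum_sup _ _ _ _ (Ordinal hq)).
apply: (@mem_sum_sup _ _ _ _ i); apply: (@mem_sum_sup _ _ _ _ j).
exact: memv_line.
Qed.

Lemma colv_mul a b n (x : 'rV[K]_(d n)) t :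
  colv (comulm a b n x) t = x *m \matrix_(k, i) dc a b n i t k.
Proof. by apply/rowP => i; rewrite !mxE; apply: eq_bigr => k _; rewrite mxE. Qed.

Lemma row_mul a b n (x : 'rV[K]_(d n)) s :
  row s (comulm a b n x) = x *m \matrix_(k, j) dc a b n s j k.
Proof. by apply/rowP => j; rewrite !mxE; apply: eq_bigr => k _; rewrite mxE. Qed.

Lemma Q_coalg : is_gsubcoalg Q.
Proof.
move=> n x xQ a an; apply: tens_in_tensor; split.
  move=> t.
  have sub : (Q n <= linfun (mulmxr (\matrix_(k, i) dc a (n - a) n i t k)) @^-1: Q a)%VS.
    apply: Q_sub => p q u w uS wS; rewrite -memv_preim lfunE /=.
    case: (eqVneq n (p + q)%N) => [E | ne]; last by rewrite hmul_gr // mul0mx mem0v.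
    subst n; rewrite -colv_mul (col_comulm_hmul HH).
    apply: rpred_sum => p1 _; apply: rpred_sum => q1 _.
    apply: rpred_sum => i2 _; apply: rpred_sum => j2 _; apply: rpredZ.
    apply: memQ.
      by case: (S_tens (esym (subnKC (ltn_ord p1 : (p1 <= p)%N))) uS) => h _; apply: h.
    by case: (S_tens (esym (subnKC (ltn_ord q1 : (q1 <= q)%N))) wS) => h _; apply: h.
  by move: (subvP sub x xQ); rewrite -memv_preim lfunE /= -colv_mul.
move=> s.
have sub : (Q n <= linfun (mulmxr (\matrix_(k, j) dc a (n - a) n s j k)) @^-1: Q (n - a))%VS.
  apply: Q_sub => p q u w uS wS; rewrite -memv_preim lfunE /=.
  case: (eqVneq n (p + q)%N) => [E | ne]; last by rewrite hmul_gr // mul0mx mem0v.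
  subst n; rewrite -row_mul (row_comulm_hmul HH).
  apply: rpred_sum => p1 _; apply: rpred_sum => q1 _.
  apply: rpred_sum => i1 _; apply: rpred_sum => j1 _; apply: rpredZ.
  apply: memQ.
    by case: (S_tens (esym (subnKC (ltn_ord p1 : (p1 <= p)%N))) uS) => _ h; apply: h.
  by case: (S_tens (esym (subnKC (ltn_ord q1 : (q1 <= q)%N))) wS) => _ h; apply: h.
by move: (subvP sub x xQ); rewrite -memv_preim lfunE /= -row_mul.
Qed.

Lemma Q_agree : agree_on phi psi Q.
Proof.
move=> n x xQ.
have sub : (Q n <= ann <[th n]>)%VS.
  apply: Q_sub => p q u w uS wS; apply/ann_line.
  case: (eqVneq n (p + q)%N) => [E | ne]; last by rewrite hmul_gr // ev0r.
  subst n; rewrite /th evBl !char_mul // -!lvalE (S_agree uS) (S_agree wS).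
  by rewrite subrr.
have /ann_line := subvP sub x xQ.
by rewrite /th evBl -!lvalE => /eqP; rewrite subr_eq0 => /eqP.
Qed.

Lemma hmul_S p q x y : x \in S p -> y \in S q -> hmul p q (p + q) x y \in S (p + q).
Proof.
move=> xS yS; apply: (subvP (S_max Q_coalg Q_agree (p + q))); exact: memQ.
Qed.

Lemma th0 : th 0 = 0.
Proof.
case: Hphi => h1 _; case: Hpsi => h2 _.
by apply/rowP => i; rewrite !mxE h1 h2 subrr.
Qed.

Lemma const1_S : (const_mx 1 : 'rV[K]_(d 0)) \in S 0.
Proof.
rewrite memST; apply/mem_annP; apply: J_ev => N p m r i j.
case: (eqVneq 0%N (N + r)%N) => [E | ne]; last by rewrite /gen dmul_gr // ev0l.
case: (eqVneq N (p + m)%N) => [E2 | ne2]; last first.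
  by rewrite /gen [dmul p m N _ _](dmul_gr HH) // dmul0l ev0l.
have Em : m = 0%N by lia.
subst m; by rewrite /gen th0 dmul0r dmul0l ev0l.
Qed.

End Main.



End Aux.
Import Aux.
Import GRing.Theory.

Theorem corollary5p4 (K : fieldType) (H : gHopfData K)
  (HH : is_gcHopf H) (phi psi : lfun H)
  (Hphi : is_character phi) (Hpsi : is_character psi)
  (S : gsubspace H) (HS : is_S phi psi S) :
  exists F : forall n, {linear 'rV[K]_(hdim H n) -> sdual S n},
    iso_data S (Icomp phi psi) F.
Proof.
have sevE n a x : sev S n (@Fm K _ (S n) a) x = ev a (projv (S n) x).
  by rewrite /sev FmE vsvalproj.
have sevS n a x : x \in S n -> sev S n (@Fm K _ (S n) a) x = ev a x.
  by move=> xS; rewrite sevE projv_id.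
exists (fun n => @Fm K _ (S n)); split.
- move=> n g; exists (\row_i g (vsproj (S n) (drow n i))).
  apply/lfunP => u; rewrite FmE /ev.
  rewrite -{2}(vsvalK u) {2}(row_sum_delta (vsval u)) !linear_sum.
  by apply: eq_bigr => i _; rewrite !linearZ /= mxE.
- move=> n a; split => [Fa0 | aI].
    apply: (proj1 (ker_iff HH HS a)) => x xS.
    have := congr1 (fun f : sdual S n => f (vsproj (S n) x)) Fa0.
    by rewrite zero_lfunE /= FmE vsprojK.
  apply/lfunP => u; rewrite zero_lfunE FmE.
  by apply: (proj2 (ker_iff HH HS a) aI); apply: subvsP.
split.
- move=> p q a b x xS; rewrite sevS // ev_dmul.
  transitivity (bil (comulm p q (p + q) x)
     (\row_i ev a (projv (S p) (drow p i))) (\row_j ev b (projv (S q) (drow q j)))).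
    apply: (tens_bil (S_tens HS (erefl _) xS)) => u uS; by rewrite ev_projrow projv_id.
  by apply: eq_bigr => i _; apply: eq_bigr => j _; rewrite !mxE !sevE.
- move=> x xS; rewrite sevS //; apply: eq_bigr => i _; by rewrite mxE mulr1.
- move=> p q a x y xS yS; rewrite sevS ?(hmul_S HH Hphi Hpsi HS) // ev_hmul.
  by apply: eq_bigr => i _; apply: eq_bigr => j _; rewrite !sevS // !ev_deltal.
- move=> a; rewrite sevS ?(const1_S HH Hphi Hpsi HS) //.
  by apply: eq_bigr => i _; rewrite mxE mul1r.
Qed.
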